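(* Let $C=(C_1,C_2)$ be an equitable partition of $J(n,w)$ with quotient matrix $\begin{pmatrix} a & b\\ c& d\end{pmatrix}$, where $b+c>0$, and let $f=\chi_{C_1}$. Then $$\frac{bc}{b+c}\binom{n}{w}=\sum_{1\le i<j\le n}|S(f_{i,j})|,$$ where $S(f_{i,j})$ denotes the support (set of nonzeros) of the partial difference $f_{i,j}$.
   Context: The Johnson graph $J(n,w)$ has as vertices the binary vectors of length $n$ with exactly $w$ ones; two vertices are adjacent iff they have exactly $w-1$ common ones. An equitable partition $(C_1,C_2)$ with quotient matrix $(s_{ij})$: every vertex of $C_i$ has exactly $s_{ij}$ neighbours in $C_j$. $\chi_{C_1}$ is the characteristic function of $C_1$. For $f:J(n,w)\to\mathbb{R}$ and $i<j$, the partial difference $f_{i,j}:J(n-2,w-1)\to\mathbb{R}$ is $f_{i,j}(y)=f(y^{(1,0)})-f(y^{(0,1)})$, where $y$ is indexed by $\{1,\dots,n\}\setminus\{i,j\}$ and $y^{(a,b)}$ is obtained by inserting $a$ at position $i$ and $b$ at position $j$. *)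

(* Defs.v *)
From mathcomp Require Import all_boot all_order all_algebra.
Set Implicit Arguments. Unset Strict Implicit. Unset Printing Implicit Defensive.
Import Order.TTheory GRing.Theory Num.Theory.
Local Open Scope ring_scope.

(* Vertices of J(n,w): binary vectors of length n with w ones, represented
   by their supports, i.e. subsets of 'I_n of size w. *)
Definition JV (n w : nat) : {set {set 'I_n}} := [set x : {set 'I_n} | #|x| == w].

Definition Jadj (n w : nat) (x y : {set 'I_n}) : bool :=
  [&& x \in JV n w, y \in JV n w, x != y & (#|x :&: y|.+1 == w)%N].

Definition nbrs_in (n w : nat) (x : {set 'I_n}) (C : {set {set 'I_n}}) : nat :=
  #|[set y in C | Jadj w x y]|.

Definition is_partition2 (n w : nat) (C1 C2 : {set {set 'I_n}}) : Prop :=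
  C1 :|: C2 = JV n w /\ C1 :&: C2 = set0.

Definition equitable2 (n w : nat) (C1 C2 : {set {set 'I_n}}) (a b c d : nat) : Prop :=
  is_partition2 w C1 C2 /\
  (forall x, x \in C1 -> nbrs_in w x C1 = a /\ nbrs_in w x C2 = b) /\
  (forall x, x \in C2 -> nbrs_in w x C1 = c /\ nbrs_in w x C2 = d).

Definition chi (n : nat) (C : {set {set 'I_n}}) (x : {set 'I_n}) : rat :=
  (x \in C)%:R.

(* Vertices of J(n-2,w-1) on the coordinates {1..n}\{i,j}: subsets Y of
   'I_n avoiding i and j, with |Y| = w-1 (empty when w = 0). *)
Definition Jminor (n w : nat) (i j : 'I_n) : {set {set 'I_n}} :=
  [set Y : {set 'I_n} | [&& i \notin Y, j \notin Y & (#|Y|.+1 == w)%N]].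

(* partial difference f_{i,j}(y) = f(y^(1,0)) - f(y^(0,1)) *)
Definition pdiff (n : nat) (f : {set 'I_n} -> rat) (i j : 'I_n) (Y : {set 'I_n}) : rat :=
  f (i |: Y) - f (j |: Y).

Definition pdiff_support (n w : nat) (f : {set 'I_n} -> rat) (i j : 'I_n)
  : {set {set 'I_n}} :=
  [set Y in Jminor w i j | pdiff f i j Y != 0].

(* Main.v *)
Require Import Defs.
From mathcomp Require Import all_boot all_order all_algebra.
From mathcomp Require Import zify ring.
Set Implicit Arguments. Unset Strict Implicit. Unset Printing Implicit Defensive.
Import Order.TTheory GRing.Theory Num.Theory.
Local Open Scope ring_scope.

Lemma sum_ind (T : finType) (Q : pred T) :
  (\sum_t (Q t : nat) = #|[set t | Q t]|)%N.
Proof. by rewrite -sum1dep_card [RHS]big_mkcond; apply: eq_bigr => t _; case: (Q t). Qed.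

Lemma Jadj_sym n w (x y : {set 'I_n}) : Jadj w x y = Jadj w y x.
Proof. by rewrite /Jadj setIC eq_sym; case: (x \in _); case: (y \in _). Qed.

Lemma C2_of_C1 n w (C1 C2 : {set {set 'I_n}}) x :
  is_partition2 w C1 C2 -> x \in JV n w -> (x \in C2) = ~~ (x \in C1).
Proof.
move=> [hU hI] hx.
have h1 : (x \in C1) || (x \in C2) by rewrite -in_setU hU.
have h2 : ~~ ((x \in C1) && (x \in C2)) by rewrite -in_setI hI inE.
by move: h1 h2; case: (x \in C1); case: (x \in C2).
Qed.

Lemma Jminor_sym n w (i j : 'I_n) : Jminor w i j = Jminor w j i.
Proof. by apply/setP => Y; rewrite !inE; case: (i \in Y); case: (j \in Y). Qed.

Lemma JV_add n w (i : 'I_n) (Y : {set 'I_n}) : i \notin Y -> (#|Y|.+1 == w)%N -> i |: Y \in JV n w.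
Proof. by move=> hi hY; rewrite inE cardsU1 hi add1n. Qed.

Definition g n w (C1 C2 : {set {set 'I_n}}) (i j : 'I_n) (Y : {set 'I_n}) : bool :=
  [&& i != j, Y \in Jminor w i j, i |: Y \in C1 & j |: Y \in C2].

Lemma pdiff_ind n w (C1 C2 : {set {set 'I_n}}) (i j : 'I_n) (Y : {set 'I_n}) :
  is_partition2 w C1 C2 -> i != j ->
  ((Y \in pdiff_support w (chi C1) i j) : nat) = (g w C1 C2 i j Y + g w C1 C2 j i Y)%N.
Proof.
move=> hP hij; rewrite /g /pdiff_support inE (Jminor_sym w j i) (eq_sym j i) hij.
case hY: (Y \in Jminor w i j) => //=.
move: hY; rewrite inE => /and3P [hi hj hc].
rewrite !(C2_of_C1 hP) ?JV_add //.
rewrite /pdiff /chi.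
by case: (i |: Y \in C1); case: (j |: Y \in C1); rewrite /= ?subrr ?eqxx ?subr0 ?oner_eq0 //= sub0r oppr_eq0 oner_eq0.
Qed.

Lemma setI_U1 n (i j : 'I_n) (Y : {set 'I_n}) :
  i != j -> i \notin Y -> j \notin Y -> (i |: Y) :&: (j |: Y) = Y.
Proof.
move=> hij hi hj; apply/setP => z; rewrite !inE.
case: (eqVneq z i) => [->|zi]; first by rewrite (negbTE hij) (negbTE hi).
case: (eqVneq z j) => [->|zj] //=.
  by rewrite andbT. by rewrite andbb.
Qed.

Lemma diff_single n w (x y : {set 'I_n}) : Jadj w x y -> exists i, x :\: y = [set i].
Proof.
case/and4P; rewrite !inE => /eqP hx /eqP hy _ /eqP hc.
apply/cards1P; rewrite cardsD hx -hc; apply/eqP; lia.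
Qed.

Section S.
Variables (n w : nat) (C1 C2 : {set {set 'I_n}}).
Hypothesis hP : is_partition2 w C1 C2.

Definition Dset := [set t : 'I_n * 'I_n * {set 'I_n} | g w C1 C2 t.1.1 t.1.2 t.2].
Definition Pset := [set p : {set 'I_n} * {set 'I_n} | [&& p.1 \in C1, p.2 \in C2 & Jadj w p.1 p.2]].
Definition phi (t : 'I_n * 'I_n * {set 'I_n}) := (t.1.1 |: t.2, t.1.2 |: t.2).

Lemma card_PD : #|Pset| = #|Dset|.
Proof.
have -> : Pset = phi @: Dset.
  apply/setP => -[x y]; rewrite inE /=; apply/idP/imsetP.
  - case/and3P => hx hy hadj.
    have [i hi] := diff_single hadj.
    have [j hj] := diff_single (etrans (Jadj_sym _ _ _) hadj).
    have hix : i \in x :\: y by rewrite hi set11.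
    have hjy : j \in y :\: x by rewrite hj set11.
    move: (hix) (hjy); rewrite !inE => /andP [iy ix] /andP [jx jy].
    have ex : x = i |: (x :&: y) by rewrite -hi setUC setID.
    have ey : y = j |: (x :&: y) by rewrite -hj setUC setIC setID.
    exists ((i, j), x :&: y); last by rewrite /phi /= -ex -ey.
    rewrite inE /g /= -ex -ey hx hy andbT.
    case/and4P: hadj => _ _ _ hc.
    rewrite inE !inE (negbTE iy) (negbTE jx) andbF /= hc andbT.
    rewrite andbT; apply/eqP => eij; move: iy; by rewrite eij jy.
  - case=> -[[i j] Y]; rewrite inE /g /= => /and4P [hij hY h1 h2] [-> ->].
    rewrite h1 h2 /=.
    move: hY; rewrite inE => /and3P [hi hj hc].
    rewrite /Jadj !JV_add //= setI_U1 // hc andbT.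
    apply/eqP => e; have : i \in i |: Y by rewrite setU11.
    by rewrite e !inE (negbTE hi) orbF (negbTE hij).
apply: card_in_imset => -[[i j] Y] -[[i' j'] Y']; rewrite !inE /g /=.
case/and4P => hij hY _ _ /and4P [hij' hY' _ _] [e1 e2].
move: hY hY'; rewrite !inE => /and3P [hi hj _] /and3P [hi' hj' _].
have eY : Y = Y' by rewrite -(setI_U1 hij hi hj) -(setI_U1 hij' hi' hj') e1 e2.
subst Y'.
have ei : i = i'.
  have : i \in i' |: Y by rewrite -e1 setU11.
  by case/setU1P => // hiY; rewrite hiY in hi.
have ej : j = j'.
  have : j \in j' |: Y by rewrite -e2 setU11.
  by case/setU1P => // hjY; rewrite hjY in hj.
by rewrite ei ej.
Qed.
End S.

Lemma sym_sum n (G : 'I_n -> 'I_n -> nat) : (forall i, G i i = 0%N) ->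
  (\sum_(i < n) \sum_(j < n | (i < j)%N) (G i j + G j i) = \sum_(i < n) \sum_(j < n) G i j)%N.
Proof.
move=> G0.
rewrite (eq_bigr (fun i : 'I_n => \sum_(j < n | (i < j)%N) G i j + \sum_(j < n | (i < j)%N) G j i)%N); last by move=> i _; rewrite big_split.
rewrite big_split /=.
rewrite [X in (_ + X)%N](eq_bigr (fun i : 'I_n => \sum_(j < n) if (i < j)%N then G j i else 0%N)); last by move=> i _; rewrite big_mkcond.
rewrite [X in (X + _)%N](eq_bigr (fun i : 'I_n => \sum_(j < n) if (i < j)%N then G i j else 0%N)); last by move=> i _; rewrite big_mkcond.
rewrite [X in (_ + X)%N]exchange_big /= -big_split /=.
apply: eq_bigr => i _; rewrite -big_split /=; apply: eq_bigr => j _.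
case: (ltngtP i j) => h; rewrite ?addn0 ?add0n //.
by move: h => /ord_inj ->; rewrite G0.
Qed.


Lemma card_sum (T : finType) (A : {set T}) : (#|A| = \sum_t (t \in A : nat))%N.
Proof. by rewrite -sum1_card [LHS]big_mkcond; apply: eq_bigr => t _; case: (t \in A). Qed.

Theorem lemma4 (n w : nat) (C1 C2 : {set {set 'I_n}}) (a b c d : nat) :
  equitable2 w C1 C2 a b c d -> (0 < b + c)%N ->
  (b * c)%:R / (b + c)%:R * ('C(n, w))%:R =
  ((\sum_(i < n) \sum_(j < n | (i < j)%N) #|pdiff_support w (chi C1) i j|)%N)%:R
    :> rat.
Proof.
move=> [hP [h1 h2]] hbc.
pose G i j := (\sum_Y (g w C1 C2 i j Y : nat))%N.
have hN : forall i j : 'I_n, (i < j)%N -> #|pdiff_support w (chi C1) i j| = (G i j + G j i)%N.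
  move=> i j hij; rewrite card_sum -big_split; apply: eq_bigr => Y _; apply: pdiff_ind => //.
  by apply/negP => /eqP e; rewrite e ltnn in hij.
have hR : (\sum_(i < n) \sum_(j < n | (i < j)%N) #|pdiff_support w (chi C1) i j| = #|Dset w C1 C2|)%N.
  under eq_bigr => i _ do under eq_bigr => j hij do rewrite hN //.
  rewrite sym_sum; last by move=> i; apply: big1 => Y _; rewrite /g eqxx.
  rewrite /G pair_big /= pair_big /= sum_ind.
  by [].
rewrite hR -(@card_PD _ w C1 C2).
have hE : #|Pset w C1 C2| = (\sum_x \sum_y ([&& x \in C1, y \in C2 & Jadj w x y] : nat))%N.
  by rewrite pair_big /= sum_ind.
have hE1 : #|Pset w C1 C2| = (#|C1| * b)%N.
  rewrite hE card_sum big_distrl /=; apply: eq_bigr => x _.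
  case hx: (x \in C1) => /=; last by rewrite mul0n big1.
  by rewrite mul1n sum_ind -(h1 x hx).2.
have hE2 : #|Pset w C1 C2| = (#|C2| * c)%N.
  rewrite hE exchange_big card_sum big_distrl /=; apply: eq_bigr => y _.
  case hy: (y \in C2) => /=; last by rewrite mul0n big1 // => x _; rewrite andbF.
  rewrite mul1n -(h2 y hy).1 /nbrs_in -sum_ind; apply: eq_bigr => x _.
  by rewrite Jadj_sym.
have hC : (#|C1| + #|C2| = 'C(n, w))%N.
  case: hP => hU hI.
  have := cardsU C1 C2; rewrite hI cards0 subn0 hU => <-.
  by rewrite /JV card_draws card_ord.
have hnat : (#|Pset w C1 C2| * (b + c) = b * c * 'C(n, w))%N.
  rewrite -hC; nia.
have hbc' : (b + c)%:R != 0 :> rat by rewrite pnatr_eq0 -lt0n.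
rewrite -[X in _ = X](mulfK hbc') -natrM hnat !natrM.
field.
by rewrite -natrD.
Qed.
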